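(* Let $X$ be a vector lattice and let $l : X \to \mathbb{R}$ be a linear functional. Then $l$ is the sum of some pair of Riesz homomorphisms $X \to \mathbb{R}$ if and only if $l$ is positive and its kernel $\ker(l)$ is a Grothendieck subspace of $X$.
   Context: A Riesz homomorphism $X\to\mathbb{R}$ is a linear functional preserving finite lattice operations. A linear subspace $H$ of a vector lattice is called a Grothendieck subspace (or $G$-space) if for all $x, y \in H$ one has $x \vee y \vee 0 + x \wedge y \wedge 0 \in H$. *)

(* Defs.v *)
From HB Require Import structures.
From mathcomp Require Import all_boot all_order all_algebra.
From mathcomp Require Import reals.
Set Implicit Arguments. Unset Strict Implicit. Unset Printing Implicit Defensive.
Import Order.TTheory GRing.Theory Num.Theory.
Local Open Scope ring_scope.

Section VL.
Variables (R : realType) (X : lmodType R).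
Variables (le : X -> X -> Prop) (join meet : X -> X -> X).

Record is_vector_lattice : Prop := {
  vl_refl : forall x, le x x;
  vl_antisym : forall x y, le x y -> le y x -> x = y;
  vl_trans : forall x y z, le x y -> le y z -> le x z;
  vl_add : forall x y z, le x y -> le (x + z) (y + z);
  vl_scale : forall (a : R) x y, 0 <= a -> le x y -> le (a *: x) (a *: y);
  vl_join_l : forall x y, le x (join x y);
  vl_join_r : forall x y, le y (join x y);
  vl_join_lub : forall x y z, le x z -> le y z -> le (join x y) z;
  vl_meet_l : forall x y, le (meet x y) x;
  vl_meet_r : forall x y, le (meet x y) y;
  vl_meet_glb : forall x y z, le z x -> le z y -> le z (meet x y)
}.

Definition linear_functional (f : X -> R) : Prop :=
  forall (a : R) x y, f (a *: x + y) = a * f x + f y.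

Definition riesz_hom (f : X -> R) : Prop :=
  [/\ linear_functional f,
      forall x y, f (join x y) = Num.max (f x) (f y) &
      forall x y, f (meet x y) = Num.min (f x) (f y)].

Definition positive_functional (f : X -> R) : Prop :=
  forall x, le 0 x -> 0 <= f x.

Definition linear_subspace (H : X -> Prop) : Prop :=
  H 0 /\ forall (a : R) x y, H x -> H y -> H (a *: x + y).

Definition grothendieck_subspace (H : X -> Prop) : Prop :=
  linear_subspace H /\
  forall x y, H x -> H y -> H (join (join x y) 0 + meet (meet x y) 0).

Definition kernel (f : X -> R) : X -> Prop := fun x => f x = 0.

End VL.

(* Main.v *)
Require Import Defs.
Set Warnings "-notation-overridden,-ambiguous-paths".
From HB Require Import structures.
From mathcomp Require Import all_boot all_order all_algebra.
From mathcomp Require Import reals.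
From mathcomp Require Import ring lra.
From Stdlib Require Classical_Prop.
Import Order.TTheory GRing.Theory Num.Theory.
Local Open Scope ring_scope.
Set Implicit Arguments. Unset Strict Implicit. Unset Printing Implicit Defensive.

Section Lat.
Variables (R : realType) (X : lmodType R).
Variables (le : X -> X -> Prop) (join meet : X -> X -> X).
Hypothesis hX : is_vector_lattice le join meet.

Lemma leA x y : le x y -> le y x -> x = y. Proof. by move=> *; apply: (vl_antisym hX). Qed.
Lemma leR x : le x x. Proof. by move=> *; apply: (vl_refl hX). Qed.
Lemma leT x y z : le x y -> le y z -> le x z. Proof. by move=> h1 h2; apply: (vl_trans hX h1 h2). Qed.
Lemma leDr x y z : le x y -> le (x + z) (y + z). Proof. by move=> *; apply: (vl_add hX). Qed.
Lemma leDl x y z : le x y -> le (z + x) (z + y).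
Proof. by move=> h; rewrite ![z + _]addrC; apply: leDr. Qed.
Lemma leD x y x' y' : le x y -> le x' y' -> le (x + x') (y + y').
Proof. move=> h1 h2; apply: (leT (leDr x' h1)); exact: leDl. Qed.
Lemma le_sub x y : le x y <-> le 0 (y - x).
Proof.
split=> h; first by have := leDr (- x) h; rewrite subrr.
by have := leDr x h; rewrite add0r subrK.
Qed.
Lemma leN x y : le x y -> le (- y) (- x).
Proof. by move=> /le_sub h; apply/le_sub; rewrite opprK addrC. Qed.
Lemma leNN x y : le (- y) (- x) -> le x y.
Proof. by move=> /leN; rewrite !opprK. Qed.
Lemma jl x y : le x (join x y). Proof. by move=> *; apply: (vl_join_l hX). Qed.
Lemma jr x y : le y (join x y). Proof. by move=> *; apply: (vl_join_r hX). Qed.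
Lemma jlub x y z : le x z -> le y z -> le (join x y) z. Proof. by move=> *; apply: (vl_join_lub hX). Qed.
Lemma ml x y : le (meet x y) x. Proof. by move=> *; apply: (vl_meet_l hX). Qed.
Lemma mr x y : le (meet x y) y. Proof. by move=> *; apply: (vl_meet_r hX). Qed.
Lemma mglb x y z : le z x -> le z y -> le z (meet x y). Proof. by move=> *; apply: (vl_meet_glb hX). Qed.
Lemma leZ (a : R) x y : 0 <= a -> le x y -> le (a *: x) (a *: y). Proof. by move=> *; apply: (vl_scale hX). Qed.

Lemma joinC x y : join x y = join y x.
Proof. by apply: leA; apply: jlub; (apply: jl || apply: jr). Qed.
Lemma meetC x y : meet x y = meet y x.
Proof. by apply: leA; apply: mglb; (apply: ml || apply: mr). Qed.

Lemma join_transl x y z : join (z + x) (z + y) = z + join x y.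
Proof.
apply: leA.
  by apply: jlub; apply: leDl; [apply: jl | apply: jr].
have h : le (join x y) (- z + join (z + x) (z + y)).
  apply: jlub.
    by have := leDl (- z) (jl (z + x) (z + y)); rewrite addrA addNr add0r.
  by have := leDl (- z) (jr (z + x) (z + y)); rewrite addrA addNr add0r.
by have := leDl z h; rewrite addrA subrr add0r.
Qed.
Lemma meet_transl x y z : meet (z + x) (z + y) = z + meet x y.
Proof.
apply: leA; last first.
  by apply: mglb; apply: leDl; [apply: ml | apply: mr].
have h : le (- z + meet (z + x) (z + y)) (meet x y).
  apply: mglb.
    by have := leDl (- z) (ml (z + x) (z + y)); rewrite addrA addNr add0r.
  by have := leDl (- z) (mr (z + x) (z + y)); rewrite addrA addNr add0r.
by have := leDl z h; rewrite addrA subrr add0r.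
Qed.
Lemma join_opp x y : join (- x) (- y) = - meet x y.
Proof.
apply: leA.
  by apply: jlub; apply: leN; [apply: ml | apply: mr].
apply: leNN; rewrite opprK; apply: mglb; apply: leNN; rewrite opprK;
  [apply: jl | apply: jr].
Qed.
Lemma meet_opp x y : meet (- x) (- y) = - join x y.
Proof.
by rewrite -[x]opprK -[y]opprK join_opp !opprK.
Qed.
Lemma join_meet x y : join x y + meet x y = x + y.
Proof.
have e : meet x y = x + y + meet (- y) (- x).
  by rewrite -meet_transl addrK [x + y]addrC addrK meetC.
by rewrite e meet_opp joinC addrC -addrA addNr addr0.
Qed.
Lemma join_pos x : le 0 x -> join x 0 = x.
Proof. by move=> h; apply: leA; [apply: jlub => //; apply: leR | apply: jl]. Qed.
Lemma meet_scale (c : R) x y : 0 < c -> meet (c *: x) (c *: y) = c *: meet x y.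
Proof.
move=> hc; apply: leA; last first.
  by apply: mglb; apply: leZ; rewrite ?ltW //; [apply: ml | apply: mr].
have h : le (c^-1 *: meet (c *: x) (c *: y)) (meet x y).
  have hc' : 0 <= c^-1 by rewrite invr_ge0 ltW.
  apply: mglb.
    by have := leZ hc' (ml (c *: x) (c *: y)); rewrite scalerA mulVf ?gt_eqF // scale1r.
  by have := leZ hc' (mr (c *: x) (c *: y)); rewrite scalerA mulVf ?gt_eqF // scale1r.
by have := leZ (ltW hc) h; rewrite scalerA mulfV ?gt_eqF // scale1r.
Qed.
Lemma meet_mono x y x' y' : le x x' -> le y y' -> le (meet x y) (meet x' y').
Proof. move=> h1 h2; apply: mglb; [apply: leT h1; apply: ml | apply: leT h2; apply: mr]. Qed.
Lemma meet_pos x y : le 0 x -> le 0 y -> le 0 (meet x y).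
Proof. by move=> h1 h2; apply: mglb. Qed.
Lemma disj_below p q p' q' : le 0 p' -> le 0 q' -> le p' p -> le q' q ->
  meet p q = 0 -> meet p' q' = 0.
Proof.
move=> h1 h2 h3 h4 h; apply: leA; last exact: meet_pos.
by rewrite -h; apply: meet_mono.
Qed.
Lemma scale_pos (c : R) x : 0 <= c -> le 0 x -> le 0 (c *: x).
Proof. by move=> hc hx; have := leZ hc hx; rewrite scaler0. Qed.
Lemma le_scale_r (s t : R) x : s <= t -> le 0 x -> le (s *: x) (t *: x).
Proof.
move=> h hx; apply/le_sub; rewrite -scalerBl; apply: scale_pos => //.
by rewrite subr_ge0.
Qed.
Lemma disj_scale p q (s t : R) : le 0 p -> le 0 q -> meet p q = 0 ->
  0 <= s -> 0 <= t -> meet (s *: p) (t *: q) = 0.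
Proof.
move=> hp hq h hs ht.
have hm : 0 < s + t + 1 by lra.
rewrite (@disj_below ((s + t + 1) *: p) ((s + t + 1) *: q)) //.
- exact: scale_pos.
- exact: scale_pos.
- by apply: le_scale_r => //; lra.
- by apply: le_scale_r => //; lra.
- by rewrite meet_scale // h scaler0.
Qed.
Lemma disj_join p q : meet p q = 0 -> join p q = p + q.
Proof. by move=> h; rewrite -join_meet h addr0. Qed.
Lemma meet_subadd p q x : le 0 p -> le 0 q -> le 0 x ->
  le (meet (p + q) x) (meet p x + meet q x).
Proof.
move=> hp hq hx.
have hx1 : forall y, le 0 y -> le x (x + y).
  by move=> y hy; have := leDl x hy; rewrite addr0.
have e1 : meet p x + meet q x = meet (p + meet q x) (x + meet q x).
  by rewrite ![_ + meet q x]addrC meet_transl.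
have e2 : p + meet q x = meet (p + q) (p + x) by rewrite meet_transl.
have e3 : x + meet q x = meet (x + q) (x + x) by rewrite meet_transl.
rewrite e1 e2 e3.
apply: mglb; apply: mglb.
- by rewrite [p + q]addrC; apply: ml.
- apply: leT (mr _ _) _; rewrite addrC; exact: hx1.
- apply: leT (mr _ _) _; exact: hx1.
- apply: leT (mr _ _) _; exact: hx1.
Qed.

Definition pos x := join x 0.
Definition neg x := join (- x) 0.
Lemma pos_ge0 x : le 0 (pos x). Proof. exact: jr. Qed.
Lemma neg_ge0 x : le 0 (neg x). Proof. exact: jr. Qed.
Lemma pos_neg x : pos x - neg x = x.
Proof.
rewrite /pos /neg -{2}oppr0 join_opp opprK join_meet addr0 //.
Qed.
Lemma neg_posE x : neg x = pos x - x.
Proof.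
rewrite /neg /pos; have := join_transl x 0 (- x).
by rewrite addNr addr0 joinC => ->; rewrite addrC.
Qed.
Lemma pos_neg_disj x : meet (pos x) (neg x) = 0.
Proof.
rewrite neg_posE -{1}(addr0 (pos x)) meet_transl -{1}oppr0 meet_opp.
by rewrite joinC subrr.
Qed.
Lemma Tform x P Q : le 0 x -> meet P Q = 0 ->
  join (join (x - P) (x - Q)) 0 + meet (meet (x - P) (x - Q)) 0
  = x - (P + Q) + meet (P + Q) x.
Proof.
move=> hx hPQ.
rewrite join_transl join_opp hPQ oppr0 addr0 join_pos //.
rewrite meet_transl meet_opp (disj_join hPQ).
have e : join (P + Q - x) 0 = P + Q - meet x (P + Q).
  by rewrite -[X in join _ X](subrr (P + Q)) join_transl join_opp.
rewrite -[X in meet _ X]oppr0 -opprB meet_opp e opprB meetC.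
by rewrite opprB addrCA addrC.
Qed.

Lemma hom_of_disj (h : X -> R) : linear_functional h ->
  (forall x, le 0 x -> 0 <= h x) ->
  (forall p q, le 0 p -> le 0 q -> meet p q = 0 -> h p = 0 \/ h q = 0) ->
  riesz_hom join meet h.
Proof.
move=> hl hpos hd.
have hD : forall x y, h (x + y) = h x + h y.
  by move=> x y; rewrite -[x + y](congr1 (fun v => v + y) (scale1r x)) hl mul1r.
have hB : forall x y, h (x - y) = h x - h y.
  move=> x y; have := hD (x - y) y; rewrite subrK => ->; lra.
have hp : forall w, h (pos w) = Num.max (h w) 0.
  move=> w; have e := pos_neg w.
  have h1 := hpos _ (pos_ge0 w); have h2 := hpos _ (neg_ge0 w).
  have e' : h w = h (pos w) - h (neg w) by rewrite -hB e.
  case: (hd _ _ (pos_ge0 w) (neg_ge0 w) (pos_neg_disj w)) => h0;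
    case: lerP => ?; lra.
have hj : forall x y, h (join x y) = Num.max (h x) (h y).
  move=> x y.
  have e : join x y = x + pos (y - x).
    by rewrite /pos -join_transl addr0 addrC subrK joinC.
  rewrite e hD hp hB; do 2 case: lerP => ?; lra.
split => // x y.
have e : meet x y = x + y - join x y.
  by rewrite -(join_meet x y) addrAC subrr add0r.
rewrite e hB hD hj; case: (lerP (h x) (h y)) => ?; lra.
Qed.

End Lat.

Section Fun.
Variables (R : realType) (X : lmodType R).
Variables (le : X -> X -> Prop) (join meet : X -> X -> X).
Hypothesis hX : is_vector_lattice le join meet.
Variable l : X -> R.
Hypothesis hl : linear_functional l.
Hypothesis hpos : positive_functional le l.
Hypothesis hG : forall x y, l x = 0 -> l y = 0 ->
  l (join (join x y) 0 + meet (meet x y) 0) = 0.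

Lemma lD x y : l (x + y) = l x + l y.
Proof. by rewrite -[x + y](congr1 (fun v => v + y) (scale1r x)) hl mul1r. Qed.
Lemma l0 : l 0 = 0.
Proof. have := lD 0 0; rewrite addr0; lra. Qed.
Lemma lZ (c : R) x : l (c *: x) = c * l x.
Proof. by rewrite -[c *: x]addr0 hl l0 addr0. Qed.
Lemma lN x : l (- x) = - l x.
Proof. by rewrite -scaleN1r lZ mulN1r. Qed.
Lemma lB x y : l (x - y) = l x - l y.
Proof. by rewrite lD lN. Qed.
Lemma lmono x y : le x y -> l x <= l y.
Proof.
move=> /(le_sub hX) h; have := hpos h; rewrite lB; lra.
Qed.
Lemma lge0 x : le 0 x -> 0 <= l x. Proof. exact: hpos. Qed.

Lemma triple a b c : le 0 a -> le 0 b -> le 0 c ->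
  meet a b = 0 -> meet a c = 0 -> meet b c = 0 ->
  0 < l a -> 0 < l b -> 0 < l c -> False.
Proof.
move=> ha hb hc hab hac hbc la lb lc.
set al := l a; set be := l b; set ga := l c.
set a' := (be * ga) *: a; set b' := (al * ga) *: b; set c' := (al * be) *: c.
have hal : 0 <= al := ltW la.
have hbe : 0 <= be := ltW lb.
have hga : 0 <= ga := ltW lc.
have ha' : le 0 a' by apply: (scale_pos hX) => //; apply: mulr_ge0.
have hb' : le 0 b' by apply: (scale_pos hX) => //; apply: mulr_ge0.
have hc' : le 0 c' by apply: (scale_pos hX) => //; apply: mulr_ge0.
have hb'c' : meet b' c' = 0 by apply: (disj_scale hX) => //; apply: mulr_ge0.
have hba : meet b a = 0 by rewrite (meetC hX).
have hca : meet c a = 0 by rewrite (meetC hX).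
have hb'a' : meet b' a' = 0.
  by apply: (disj_scale hX) => //; apply: mulr_ge0.
have hc'a' : meet c' a' = 0.
  by apply: (disj_scale hX) => //; apply: mulr_ge0.
have hSa : meet (b' + c') a' = 0.
  apply: (leA hX); last first.
    apply: (meet_pos hX) => //.
    by have := leD hX hb' hc'; rewrite addr0.
  have := meet_subadd hX hb' hc' ha'.
  by rewrite hb'a' hc'a' addr0.
have := hG (x := a' - b') (y := a' - c').
rewrite (Tform hX ha' hb'c') hSa addr0 !lB !lD !lZ -/al -/be -/ga.
move=> h.
have e : be * ga * al - (al * ga * be + al * be * ga) = 0 by apply: h; ring.
have hp : 0 < al * be * ga by rewrite !mulr_gt0.
have e2 : be * ga * al - (al * ga * be + al * be * ga) = - (al * be * ga) by ring.
by move: e; rewrite e2 => /eqP; rewrite oppr_eq0 (gt_eqF hp).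
Qed.



Definition Hab a b := [/\ le 0 a, le 0 b, meet a b = 0, l a = 1 & l b = 1].
Definition Fp a x := l (meet x (l x *: a)).

Lemma A_ineq a b x t s : Hab a b -> le 0 x -> 0 <= t -> 0 <= s ->
  l (meet x (t *: a)) + l (meet x (s *: b)) <= l x.
Proof.
case=> ha hb hab _ _ hx ht hs.
have hd : meet (meet x (t *: a)) (meet x (s *: b)) = 0.
  apply: (disj_below hX (p := t *: a) (q := s *: b)).
  - exact: (meet_pos hX hx (scale_pos hX ht ha)).
  - exact: (meet_pos hX hx (scale_pos hX hs hb)).
  - exact: (mr hX).
  - exact: (mr hX).
  - exact: (disj_scale hX ha hb hab ht hs).
rewrite -lD -(disj_join hX hd); apply: lmono; apply: (jlub hX); exact: (ml hX).
Qed.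

Lemma B_ineq a b x : Hab a b -> le 0 x ->
  l x <= l (meet x (l x *: a)) + l (meet x (l x *: b)).
Proof.
case=> ha hb hab la lb hx.
have hal : 0 <= l x := lge0 hx.
have hP := scale_pos hX hal ha; have hQ := scale_pos hX hal hb.
have hPQ : meet (l x *: a) (l x *: b) = 0 := disj_scale hX ha hb hab hal hal.
have := hG (x := x - l x *: a) (y := x - l x *: b).
rewrite (Tform hX hx hPQ) !(lB, lD, lZ, lN) la lb mulr1.
move=> h; have e := h ltac:(lra) ltac:(lra).
have := lmono (meet_subadd hX hP hQ hx).
rewrite lD (meetC hX (l x *: a)) (meetC hX (l x *: b)); lra.
Qed.

Lemma stab a b x t : Hab a b -> le 0 x -> l x <= t -> l (meet x (t *: a)) = Fp a x.
Proof.
move=> H hx ht; have hal := lge0 hx.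
have ha : le 0 a by case: H.
have h1 : Fp a x <= l (meet x (t *: a)).
  by apply: lmono; apply: (meet_mono hX (leR hX x)); apply: (le_scale_r hX).
have h2 := A_ineq H hx (le_trans hal ht) hal.
have h3 := B_ineq H hx.
move: h1; rewrite /Fp; lra.
Qed.

Lemma Hab_sym a b : Hab a b -> Hab b a.
Proof. by case=> *; split => //; rewrite (meetC hX). Qed.

Lemma Fsum a b x : Hab a b -> le 0 x -> Fp a x + Fp b x = l x.
Proof.
move=> H hx; have hal := lge0 hx.
have := A_ineq H hx hal hal; have := B_ineq H hx; rewrite /Fp; lra.
Qed.

Lemma Fsub a b x y : Hab a b -> le 0 x -> le 0 y -> Fp a (x + y) <= Fp a x + Fp a y.
Proof.
move=> H hx hy; have ha : le 0 a by case: H.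
have hlx := lge0 hx; have hly := lge0 hy.
have hta : le 0 ((l x + l y) *: a) by apply: (scale_pos hX) => //; lra.
rewrite {1}/Fp [l (x + y)]lD.
have := lmono (meet_subadd hX hx hy hta).
rewrite lD (stab H hx) ?(stab H hy) //; lra.
Qed.

Lemma pos_add x y : le 0 x -> le 0 y -> le 0 (x + y).
Proof. by move=> hx hy; have := leD hX hx hy; rewrite addr0. Qed.

Lemma Fadd a b x y : Hab a b -> le 0 x -> le 0 y -> Fp a (x + y) = Fp a x + Fp a y.
Proof.
move=> H hx hy.
have := Fsub H hx hy; have := Fsub (Hab_sym H) hx hy.
have := Fsum H hx; have := Fsum H hy; have := Fsum H (pos_add hx hy).
rewrite lD; lra.
Qed.

Lemma F0 a b : Hab a b -> Fp a 0 = 0.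
Proof. move=> H; have := Fadd H (leR hX 0) (leR hX 0); rewrite addr0; lra. Qed.

Lemma Fge0 a b x : Hab a b -> le 0 x -> 0 <= Fp a x.
Proof.
move=> H hx; have ha : le 0 a by case: H.
exact: (lge0 (meet_pos hX hx (scale_pos hX (lge0 hx) ha))).
Qed.

Lemma Fhom a b c x : Hab a b -> 0 <= c -> le 0 x -> Fp a (c *: x) = c * Fp a x.
Proof.
move=> H hc hx; have [->|cn0] := eqVneq c 0; first by rewrite scale0r (F0 H) mul0r.
have cp : 0 < c by rewrite lt0r cn0.
by rewrite /Fp lZ -scalerA (meet_scale hX) // lZ.
Qed.

Lemma Fdisj a b p q : Hab a b -> le 0 p -> le 0 q -> meet p q = 0 ->
  Fp a p = 0 \/ Fp a q = 0.
Proof.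
move=> H hp hq hpq.
have [hp0|hp0] := eqVneq (Fp a p) 0; first by left.
have [hq0|hq0] := eqVneq (Fp a q) 0; first by right.
exfalso.
have [ha hb hab la lb] := H.
have hlp := lge0 hp; have hlq := lge0 hq.
have ht : 0 <= l p + l q by lra.
have hta := scale_pos hX ht ha.
have htb : meet ((l p + l q) *: a) b = 0.
  by have := disj_scale hX ha hb hab ht ler01; rewrite scale1r.
have e1 := stab H hp (_ : l p <= l p + l q).
have e2 := stab H hq (_ : l q <= l p + l q).
have Fp0 := Fge0 H hp; have Fq0 := Fge0 H hq.
apply: (triple (a := meet p ((l p + l q) *: a)) (b := meet q ((l p + l q) *: a)) (c := b)).
- exact: (meet_pos hX hp hta).
- exact: (meet_pos hX hq hta).
- exact: hb.
- apply: (disj_below hX (p := p) (q := q)) => //.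
  + exact: (meet_pos hX hp hta).
  + exact: (meet_pos hX hq hta).
  + exact: (ml hX).
  + exact: (ml hX).
- apply: (disj_below hX (p := (l p + l q) *: a) (q := b)) => //.
  + exact: (meet_pos hX hp hta).
  + exact: (mr hX).
  + exact: (leR hX).
- apply: (disj_below hX (p := (l p + l q) *: a) (q := b)) => //.
  + exact: (meet_pos hX hq hta).
  + exact: (mr hX).
  + exact: (leR hX).
- rewrite e1; last lra. by rewrite lt0r hp0.
- rewrite e2; last lra. by rewrite lt0r hq0.
- by rewrite lb ltr01.
Qed.

End Fun.

Lemma vecid1 (R : realType) (X : lmodType R) (c : R) (P1 N1 P2 N2 : X) :
  c *: (P1 - N1) + (P2 - N2) = (c *: P1 + P2) - (c *: N1 + N2).
Proof. by rewrite scalerBr opprD !addrA; congr (_ + _); rewrite addrAC. Qed.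

Lemma vecid2 (R : realType) (X : lmodType R) (c : R) (P1 N1 P2 N2 : X) :
  c *: (P1 - N1) + (P2 - N2) = ((- c) *: N1 + P2) - ((- c) *: P1 + N2).
Proof.
rewrite !scaleNr opprD opprK scalerBr !addrA.
by rewrite (addrC (c *: P1)) -[- (c *: N1) + c *: P1 + P2]addrA [c *: P1 + P2]addrC addrA.
Qed.

Section Ext.
Variables (R : realType) (X : lmodType R).
Variables (le : X -> X -> Prop) (join meet : X -> X -> X).
Hypothesis hX : is_vector_lattice le join meet.
Variable l : X -> R.
Hypothesis hl : linear_functional l.
Hypothesis hpos : positive_functional le l.
Hypothesis hG : forall x y, l x = 0 -> l y = 0 ->
  l (join (join x y) 0 + meet (meet x y) 0) = 0.

Definition fext a x := Fp meet l a (pos join x) - Fp meet l a (neg join x).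

Lemma fdec a b p q : Hab le meet l a b -> le 0 p -> le 0 q ->
  fext a (p - q) = Fp meet l a p - Fp meet l a q.
Proof.
move=> H hp hq.
have e0 := pos_neg hX (p - q).
have e : pos join (p - q) + q = neg join (p - q) + p.
  by rewrite -[pos join (p - q)](subrK (neg join (p - q))) e0 addrAC subrK addrC.
have := Fadd hX hl hpos hG H (pos_ge0 hX (p - q)) hq.
have := Fadd hX hl hpos hG H (neg_ge0 hX (p - q)) hp.
rewrite e /fext; lra.
Qed.


Lemma flin_aux a b c P1 N1 P2 N2 : Hab le meet l a b ->
  le 0 P1 -> le 0 N1 -> le 0 P2 -> le 0 N2 ->
  fext a (c *: (P1 - N1) + (P2 - N2)) = c * fext a (P1 - N1) + fext a (P2 - N2).
Proof.
move=> H h1 h2 h3 h4.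
have FA := Fadd hX hl hpos hG H; have FH := Fhom hX hl hpos hG H.
rewrite !(fdec H) //.
have [hc|hc] := lerP 0 c.
  rewrite vecid1 (fdec H); last 2 first.
  - exact: (pos_add hX (scale_pos hX hc h1) h3).
  - exact: (pos_add hX (scale_pos hX hc h2) h4).
  have s1 := scale_pos hX hc h1; have s2 := scale_pos hX hc h2.
  rewrite !FA // !FH //; ring.
have hc' : 0 <= - c by lra.
rewrite vecid2 (fdec H); last 2 first.
- exact: (pos_add hX (scale_pos hX hc' h2) h3).
- exact: (pos_add hX (scale_pos hX hc' h1) h4).
have s1 := scale_pos hX hc' h1; have s2 := scale_pos hX hc' h2.
rewrite !FA // !FH //; ring.
Qed.

Lemma flin a b : Hab le meet l a b -> linear_functional (fext a).
Proof.
move=> H c x y.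
have := flin_aux c H (pos_ge0 hX x) (neg_ge0 hX x) (pos_ge0 hX y) (neg_ge0 hX y).
by rewrite !(pos_neg hX).
Qed.

Lemma fpos a b p : Hab le meet l a b -> le 0 p -> fext a p = Fp meet l a p.
Proof.
move=> H hp; have := fdec H hp (leR hX 0).
by rewrite subr0 (F0 hX hl hpos hG H) subr0.
Qed.

Lemma friesz a b : Hab le meet l a b -> riesz_hom join meet (fext a).
Proof.
move=> H; apply: (hom_of_disj hX (flin H)).
  by move=> x hx; rewrite (fpos H hx); exact: (Fge0 hX hpos H hx).
move=> p q hp hq hpq; rewrite (fpos H hp) (fpos H hq).
exact: (Fdisj hX hl hpos hG H hp hq hpq).
Qed.

Lemma fsum a b x : Hab le meet l a b -> fext a x + fext b x = l x.
Proof.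
move=> H; rewrite -{3}(pos_neg hX x) (lB hl).
rewrite -(Fsum hX hl hpos hG H (pos_ge0 hX x)) -(Fsum hX hl hpos hG H (neg_ge0 hX x)).
rewrite /fext; lra.
Qed.

End Ext.

Ltac splitmax := rewrite ?maxEle ?minEle; repeat match goal with
 | |- context [if ?c then _ else _] =>
   lazymatch c with context[if _ then _ else _] => fail | _ =>
     case: (boolP c) => /=; rewrite -?ltNge => ? end
 end; lra.

Lemma real_aux (R : realType) (a b : R) :
  Num.max (Num.max a b) 0 + Num.min (Num.min a b) 0 +
  (Num.max (Num.max (- a) (- b)) 0 + Num.min (Num.min (- a) (- b)) 0) = 0.
Proof. splitmax. Qed.

Lemma riesz_lin (R : realType) (X : lmodType R) (le : X -> X -> Prop)
  (join meet : X -> X -> X) (hX : is_vector_lattice le join meet) (h : X -> R) :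
  riesz_hom join meet h -> positive_functional le h.
Proof.
case=> hl hj _ x hx.
have := hj x 0; rewrite (join_pos hX hx) (l0 hl); splitmax.
Qed.

Theorem lemma1 (R : realType) (X : lmodType R) (le : X -> X -> Prop)
  (join meet : X -> X -> X) (hX : is_vector_lattice le join meet)
  (l : X -> R) (hl : linear_functional l) :
  (exists f g : X -> R, riesz_hom join meet f /\ riesz_hom join meet g /\
     forall x, l x = f x + g x) <->
  (positive_functional le l /\ grothendieck_subspace join meet (kernel l)).
Proof.
split.
- case=> f [g [hf [hg hsum]]].
  have hf' := hf; have hg' := hg.
  case: hf' => lf jf mf; case: hg' => lg jg mg.
  split.
    move=> x hx; rewrite hsum.
    have := riesz_lin hX hf hx; have := riesz_lin hX hg hx; lra.
  split.
    split; first by rewrite /kernel (l0 hl).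
    by move=> a x y; rewrite /kernel hl => -> ->; rewrite mulr0 addr0.
  move=> x y; rewrite /kernel !hsum => hx hy.
  rewrite (lD lf) (lD lg) !jf !mf !jg !mg (l0 lf) (l0 lg).
  have ex : g x = - f x by lra.
  have ey : g y = - f y by lra.
  rewrite ex ey; exact: real_aux.
- case=> hp [_ hG].
  case: (Classical_Prop.classic
    (exists a b, le 0 a /\ le 0 b /\ meet a b = 0 /\ 0 < l a /\ 0 < l b)).
    case=> a0 [b0 [ha [hb [hab [la lb]]]]].
    have H : Hab le meet l ((l a0)^-1 *: a0) ((l b0)^-1 *: b0).
      split.
      - by apply: (scale_pos hX) => //; rewrite invr_ge0 ltW.
      - by apply: (scale_pos hX) => //; rewrite invr_ge0 ltW.
      - by apply: (disj_scale hX) => //; rewrite invr_ge0 ltW.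
      - by rewrite (lZ hl) mulVf // gt_eqF.
      - by rewrite (lZ hl) mulVf // gt_eqF.
    exists (fext join meet l ((l a0)^-1 *: a0)), (fext join meet l ((l b0)^-1 *: b0)).
    split; first exact: (friesz hX hl hp hG H).
    split; first exact: (friesz hX hl hp hG (Hab_sym hX H)).
    by move=> x; rewrite (fsum hX hl hp hG x H).
  move=> hn; exists l, (fun _ => 0); split.
    apply: (hom_of_disj hX hl hp) => p q hp0 hq0 hpq.
    have [e|e] := eqVneq (l p) 0; first by left.
    have [e'|e'] := eqVneq (l q) 0; first by right.
    exfalso; apply: hn; exists p, q; split => //; split => //; split => //.
    by split; rewrite lt0r ?e ?e' hp.
  split; last by move=> x; rewrite addr0.
  split.
  - by move=> *; rewrite mulr0 addr0.
  - by move=> *; rewrite maxxx.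
  - by move=> *; rewrite minxx.
Qed.
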